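(* Fix a thresholding parameter $\omega>0$ and let $\theta$ be a real-valued random variable with some distribution $\mathcal{P}_\theta$. For a relaxing parameter $\xi^2>0$, let $\tilde\theta$ be a random variable with $\tilde\theta \mid \theta \sim \mathrm{N}(\theta,\xi^2)$, and define $T_r(\theta,\omega,\xi^2)=\theta\cdot I(|\tilde\theta|>\omega)$ (relaxed thresholding), $T_h(\theta,\omega)=\theta\cdot I(|\theta|>\omega)$ (hard thresholding), and $T_s(\theta,\omega)=\operatorname{sgn}(\theta)(|\theta|-\omega)\cdot I(|\theta|>\omega)$ (soft thresholding), where $I(\cdot)$ is the indicator function. Let $\theta^\star=\theta+\omega$ when $\theta>0$ and $\theta^\star=\theta-\omega$ when $\theta<0$. Then for any $\epsilon>0$ there exist values of $\xi^2$ such that $\Pr\left(|T_r(\theta,\omega,\xi^2)-T_h(\theta,\omega)|<\epsilon\right)>0$, $\Pr\left(|T_r(\theta,\omega,\xi^2)-\theta|<\epsilon\right)>0$, and $\Pr\left(|T_r(\theta,\omega,\xi^2)-T_s(\theta^\star,\omega)|<\epsilon\right)>0$. Furthermore, $\lim_{\xi^2\to 0}T_r(\theta,\omega,\xi^2)=T_h(\theta,\omega)$ and $\lim_{\xi^2\to\infty}T_r(\theta,\omega,\xi^2)=\theta$.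
   Context: This is the scalar version of the relaxed-thresholded Gaussian process: given a kernel $\kappa$, $\omega\ge 0$ and $\xi>0$, if $f\sim\mathrm{GP}(0,\kappa)$ and $\tilde f(x)\sim\mathrm{N}(f(x),\xi^2)$ independently across $x$, then $g(x)=f(x)I(|\tilde f(x)|>\omega)$ is called a relaxed-thresholded Gaussian process. Here $\theta$ plays the role of $f(x)$ and $\tilde\theta$ the role of $\tilde f(x)$; $\xi^2$ is the relaxing parameter. *)

(* Defs.v *)
From HB Require Import structures.
From mathcomp Require Import all_boot all_order all_algebra.
From mathcomp Require Import all_classical all_reals all_analysis.
Set Implicit Arguments. Unset Strict Implicit. Unset Printing Implicit Defensive.
Import Order.TTheory GRing.Theory Num.Theory.
Import numFieldNormedType.Exports.
Local Open Scope classical_set_scope.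
Local Open Scope ring_scope.

Definition indep2 d (T : measurableType d) (R : realType) (P : probability T R)
  (X Y : T -> R) : Prop :=
  forall A B : set R, measurable A -> measurable B ->
    P (X @^-1` A `&` Y @^-1` B) = (P (X @^-1` A) * P (Y @^-1` B))%E.

Definition std_normal_RV d (T : measurableType d) (R : realType)
  (P : probability T R) (Z : {RV P >-> R}) : Prop :=
  forall A : set R, measurable A -> distribution P Z A = normal_prob 0 1 A.

Definition ind {R : realType} (b : bool) : R := (b : nat)%:R.

Definition T_h {R : realType} (x w : R) : R := x * ind (w < `|x|).

Definition T_s {R : realType} (x w : R) : R :=
  Num.sg x * (`|x| - w) * ind (w < `|x|).

(* relaxed thresholding  T_r(theta, w, v) = theta I(|theta~| > w) where
   theta~ = theta + sqrt(v) Z, so that theta~ | theta ~ N(theta, v)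
   (v = xi^2 is the relaxing parameter). *)
Definition T_r {R : realType} (theta z w v : R) : R :=
  theta * ind (w < `|theta + Num.sqrt v * z|).

(* theta* = theta + w if theta > 0, theta - w if theta < 0 (and 0 if theta = 0) *)
Definition theta_star {R : realType} (x w : R) : R := x + Num.sg x * w.

(* Main.v *)
Require Import Defs.
From HB Require Import structures.
From mathcomp Require Import all_boot all_order all_algebra.
From mathcomp Require Import all_classical all_reals all_analysis.
From mathcomp Require Import lra.
Import Order.TTheory GRing.Theory Num.Theory.
Import numFieldNormedType.Exports.
Local Open Scope classical_set_scope.
Local Open Scope ring_scope.

Section H.
Variable R : realType.

Lemma normal_pos (a b : R) : a < b -> -2 <= a -> b <= 2 ->
  (0 < normal_prob 0 1 `[a, b])%E.
Proof.
move=> ab a2 b2.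
have c0 : 0 < normal_peak (1:R) * expR (-2) by rewrite mulr_gt0 ?expR_gt0 ?normal_peak_gt0 ?oner_neq0.
apply: (@lt_le_trans _ _ (\int[lebesgue_measure]_(x in `[a, b]) (normal_peak (1:R) * expR (-2))%:E)%E).
  rewrite integral_cst //= lebesgue_measure_itv /= lte_fin ab -EFinD.
  by rewrite -EFinM lte_fin mulr_gt0 // subr_gt0.
apply: ge0_le_integral => //=.
- by move=> x _; rewrite lee_fin ltW.
- apply/measurable_realfun.measurable_EFinP; apply: measurable_funTS; exact: measurable_normal_pdf.
move=> x; rewrite /= in_itv /= => /andP[ax xb].
rewrite normal_pdfE ?oner_neq0 // lee_fin ler_pM2l ?normal_peak_gt0 ?oner_neq0 //.
rewrite /normal_fun ler_expR subr0 expr1n. idtac.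
have : x ^+ 2 <= 4 by nra.
move=> h. rewrite -mulNr ler_pdivlMr; last by [].
lra.
Qed.

Lemma ind_if (b : bool) : ind b = if b then (1:R) else 0.
Proof. by case: b. Qed.

Lemma Ts_star (x w : R) : 0 < w -> T_s (theta_star x w) w = x.
Proof.
move=> w0; rewrite /T_s /theta_star.
have [x0|x0|->] := ltrgtP x 0.
- rewrite (ltr0_sg x0); have h : x + -1 * w < 0 by lra.
  rewrite ltr0_sg // ltr0_norm // ind_if.
  have -> : w < - (x + -1 * w) by lra.
  rewrite mulr1; lra.
- rewrite (gtr0_sg x0); have h : 0 < x + 1 * w by lra.
  rewrite gtr0_sg // gtr0_norm // ind_if.
  have -> : w < x + 1 * w by lra.
  rewrite mulr1; lra.
- by rewrite sgr0 mul0r addr0 sgr0 !mul0r.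
Qed.

Section M.
Variables (d : measure_display) (Omega : measurableType d) (P : probability Omega R).

Lemma mind (h : Omega -> R) (w : R) : measurable_fun setT h ->
  measurable_fun setT (fun o => ind (w < `|h o|) : R).
Proof.
move=> mh.
under eq_fun do rewrite ind_if.
apply: measurable_fun_ifT => //.
apply: measurable_realfun.measurable_fun_ltr => //.
exact: measurableT_comp.
Qed.

Lemma mevent (F : Omega -> R) (eps : R) : measurable_fun setT F ->
  measurable [set o | `|F o| < eps].
Proof.
move=> mF.
have mb : measurable_fun setT (fun o => `|F o| < eps).
  by apply: measurable_realfun.measurable_fun_ltr => //; exact: measurableT_comp.
have := mb measurableT [set true] I; rewrite setTI.
by congr measurable; apply/seteqP; split => o /=.
Qed.

Lemma rect_pos (theta Z : {RV P >-> R}) (A : set R) (E : set Omega) (a b : R) :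
  indep2 P theta Z -> std_normal_RV Z -> measurable A ->
  (0 < P (theta @^-1` A))%E -> a < b -> -2 <= a -> b <= 2 ->
  measurable E -> theta @^-1` A `&` Z @^-1` `[a, b] `<=` E -> (0 < P E)%E.
Proof.
move=> hi hZ mA PA ab a2 b2 mE sub.
have mab : measurable (`[a, b] : set R) by [].
apply: (@lt_le_trans _ _ (P (theta @^-1` A `&` Z @^-1` `[a, b]))); last first.
  apply: le_measure => //; rewrite inE //.
  by apply: measurableI; exact: measurable_funPTI.
rewrite hi //; apply: mule_gt0 => //.
have := hZ _ mab; rewrite /distribution /pushforward /= => ->.
exact: normal_pos.
Qed.

End M.

Lemma lim0 (t z w : R) : `|t| != w ->
  (fun v => T_r t z w v) @ 0^'+ --> T_h t w.
Proof.
move=> htw; apply: cvg_near_cst.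
set g := `| `|t| - w|.
have g0 : 0 < g by rewrite normr_gt0 subr_eq0.
set dl := (g / (`|z| + 1)) ^+ 2.
have z1 : 0 < `|z| + 1 by rewrite ltr_pwDr.
have dl0 : 0 < dl by rewrite exprn_gt0 // divr_gt0.
near=> v.
have v0 : 0 < v by near: v; exact: nbhs_right_gt.
have vd : v < dl by near: v; exact: nbhs_right_lt.
set s := Num.sqrt v.
have s0 : 0 <= s := sqrtr_ge0 v.
have sd : s < g / (`|z| + 1).
  by rewrite /s -(ger0_norm (ltW (divr_gt0 g0 z1))) -sqrtr_sqr ltr_sqrt.
have sz : s * `|z| < g.
  rewrite ltr_pdivlMr // in sd.
  have : s * `|z| <= s * (`|z| + 1) by nra.
  lra.
have e1 : `|t + s * z| <= `|t| + s * `|z|.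
  by have := ler_normD t (s * z); rewrite normrM (ger0_norm s0).
have e2 : `|t| - s * `|z| <= `|t + s * z|.
  have := ler_normD (t + s * z) (- (s * z)).
  by rewrite addrK normrN normrM (ger0_norm s0); lra.
rewrite /T_r /T_h -/s; congr (_ * ind _).
have [tw|tw|tw] := ltgtP `|t| w.
- have gE : g = w - `|t| by rewrite /g ltr0_norm ?subr_lt0 // opprB.
  apply/negbTE; rewrite -leNgt; lra.
- have gE : g = `|t| - w by rewrite /g gtr0_norm // subr_gt0.
  apply/idP; lra.
- by rewrite tw eqxx in htw.
Unshelve. all: by end_near.
Qed.


Lemma liminf (t z w : R) : z != 0 ->
  (fun v => T_r t z w v) @ +oo --> t.
Proof.
move=> z0; apply: cvg_near_cst.
have za : 0 < `|z| by rewrite normr_gt0.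
set m := (w + `|t|) / `|z| + 1.
have wpos : 0 <= w \/ w < 0 by case: (lerP 0 w) => h; [left|right].
set M := (`|m| + 1) ^+ 2.
near=> v.
have Mv : M < v by near: v; apply: nbhs_pinfty_gt; exact: num_real.
set s := Num.sqrt v.
have sM : `|m| + 1 < s.
  have h1 : 0 < `|m| + 1 by rewrite ltr_pwDr.
  rewrite /s -(ger0_norm (ltW h1)) -sqrtr_sqr ltr_sqrt //.
have ms : m < s by have := ler_norm m; lra.
have szw : w + `|t| < s * `|z|.
  have : (w + `|t|) / `|z| < s by rewrite /m in ms; lra.
  by rewrite ltr_pdivrMr.
have s0 : 0 <= s := sqrtr_ge0 v.
have e2 : s * `|z| - `|t| <= `|t + s * z|.
  have := ler_normD (t + s * z) (- t).
  have -> : t + s * z + - t = s * z by rewrite addrAC subrr add0r.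
  by rewrite normrN normrM (ger0_norm s0); lra.
rewrite /T_r -/s ind_if.
have -> : w < `|t + s * z| by lra.
by rewrite mulr1.
Unshelve. all: by end_near.
Qed.


Section M2.
Variables (d : measure_display) (Omega : measurableType d) (P : probability Omega R).

Lemma pos_split (A B : set Omega) : measurable A -> measurable B ->
  (0 < P (A `|` B))%E -> (0 < P A)%E \/ (0 < P B)%E.
Proof.
move=> mA mB h.
case: (ltP 0%E (P A)) => hA; first by left.
case: (ltP 0%E (P B)) => hB; first by right.
exfalso; have := measureU2 P mA mB; have := leeD hA hB; rewrite adde0 => h1 h2.
by have := le_trans h2 h1; rewrite leNgt h.
Qed.

Lemma pos_split_itv (X : {RV P >-> R}) (i j : interval R) (A : set Omega) :
  (0 < P A)%E -> A `<=` X @^-1` [set` i] `|` X @^-1` [set` j] ->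
  measurable A ->
  (0 < P (X @^-1` [set` i]))%E \/ (0 < P (X @^-1` [set` j]))%E.
Proof.
move=> PA sub mA; apply: pos_split; try exact: measurable_funPTI.
apply: lt_le_trans PA _; apply: le_measure => //; rewrite inE //.
by apply: measurableU; exact: measurable_funPTI.
Qed.

End M2.
End H.

Theorem proposition1 (d : measure_display) (Omega : measurableType d)
  (R : realType) (P : probability Omega R)
  (theta Z : {RV P >-> R}) (w : R) :
  0 < w ->
  std_normal_RV Z ->
  indep2 P theta Z ->
  (forall eps : R, 0 < eps ->
     (exists v : R, 0 < v /\
        (0 < P [set o | (`|T_r (theta o) (Z o) w v - T_h (theta o) w| < eps)%R])%E) /\
     (exists v : R, 0 < v /\
        (0 < P [set o | (`|T_r (theta o) (Z o) w v - theta o| < eps)%R])%E) /\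
     (exists v : R, 0 < v /\
        (0 < P [set o | (`|T_r (theta o) (Z o) w v
                            - T_s (theta_star (theta o) w) w| < eps)%R])%E)) /\
  {ae P, forall o, `|theta o| != w ->
     (fun v => T_r (theta o) (Z o) w v) @ 0^'+ --> T_h (theta o) w} /\
  {ae P, forall o,
     (fun v => T_r (theta o) (Z o) w v) @ +oo --> theta o}.
Proof.
move=> w0 hZ hi.
have mth : measurable_fun setT theta := measurable_funP theta.
have mZ : measurable_fun setT Z := measurable_funP Z.
have mTr v : measurable_fun setT (fun o => T_r (theta o) (Z o) w v).
  rewrite /T_r; apply: measurable_realfun.measurable_funM => //; apply: mind.
  by apply: measurable_realfun.measurable_funD => //; apply: measurable_realfun.measurable_funM.
have mTh : measurable_fun setT (fun o => T_h (theta o) w).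
  by rewrite /T_h; apply: measurable_realfun.measurable_funM => //; apply: mind.
have P0 : (0 < P setT)%E by rewrite probability_setT.
have lim1 : {ae P, forall o, `|theta o| != w ->
     (fun v => T_r (theta o) (Z o) w v) @ 0^'+ --> T_h (theta o) w}.
  by apply: aeW => o; exact: lim0.
have lim2 : {ae P, forall o,
     (fun v => T_r (theta o) (Z o) w v) @ +oo --> theta o}.
  exists (Z @^-1` [set 0]); split.
  - exact: measurable_funPTI.
  - have := hZ [set 0] (measurable_set1 _).
    rewrite /distribution /pushforward /= => ->.
    apply/measure0_null_setP => //.
    by apply: normal_prob_dominates; apply/measure0_null_setP => //; exact: lebesgue_measure_set1.
  - move=> o /= nQ; apply: contrapT => hz.
    have h := @liminf R (theta o) (Z o) w (introN eqP hz).
    exact: (nQ h).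
split; last by split.
move=> eps e0.
have E3 v : [set o | (`|T_r (theta o) (Z o) w v - T_s (theta_star (theta o) w) w| < eps)%R]
  = [set o | (`|T_r (theta o) (Z o) w v - theta o| < eps)%R].
  by apply/seteqP; split => o /=; rewrite Ts_star.
have mE2 v : measurable [set o | (`|T_r (theta o) (Z o) w v - theta o| < eps)%R].
  by apply: mevent; apply: measurable_realfun.measurable_funB.
have mE1 v : measurable [set o | (`|T_r (theta o) (Z o) w v - T_h (theta o) w| < eps)%R].
  by apply: mevent; apply: measurable_realfun.measurable_funB.
have part2 : exists v : R, 0 < v /\
    (0 < P [set o | (`|T_r (theta o) (Z o) w v - theta o| < eps)%R])%E.
  exists ((w + 1) ^+ 2); split; first by rewrite exprn_gt0 //; lra.
  have sq : Num.sqrt ((w + 1) ^+ 2) = w + 1 by rewrite sqrtr_sqr ger0_norm //; lra.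
  have [Ppos|Pneg] : (0 < P (theta @^-1` [set` (`[(0:R), +oo[)%R]))%E \/
                     (0 < P (theta @^-1` [set` (`]-oo, (0:R)[)%R]))%E.
    apply: (@pos_split_itv _ _ _ P theta _ _ setT P0) => // o _ /=; rewrite !in_itv /= andbT.
    by case: (leP 0 (theta o)) => h; [left|right].
  - apply: (@rect_pos R d Omega P theta Z _ _ 1 2 hi hZ _ Ppos) => //; try lra.
    move=> o [/= th zo]; rewrite in_itv /= andbT in th.
    rewrite in_itv /= in zo; case/andP: zo => z1 z2.
    rewrite /T_r sq.
    rewrite ind_if.
    have -> : w < `|theta o + (w + 1) * Z o|.
      by rewrite ltr_normr; apply/orP; left; nra.
    by rewrite mulr1 subrr normr0.
  - apply: (@rect_pos R d Omega P theta Z _ _ (-2) (-1) hi hZ _ Pneg) => //; try lra.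
    move=> o [/= th zo]; rewrite in_itv /= in th.
    rewrite in_itv /= in zo; case/andP: zo => z1 z2.
    rewrite /T_r sq.
    rewrite ind_if.
    have -> : w < `|theta o + (w + 1) * Z o|.
      by rewrite ltr_normr; apply/orP; right; nra.
    by rewrite mulr1 subrr normr0.
split; last first.
  by split => //; case: part2 => v [v0 h]; exists v; split => //; rewrite E3.
have sq1 : Num.sqrt (1:R) = 1 by rewrite sqrtr1.
have sqw : Num.sqrt (w ^+ 2) = w by rewrite sqrtr_sqr ger0_norm //; lra.
have [Ppos|Pneg] : (0 < P (theta @^-1` [set` (`[(0:R), +oo[)%R]))%E \/
                   (0 < P (theta @^-1` [set` (`]-oo, (0:R)[)%R]))%E.
  apply: (@pos_split_itv _ _ _ P theta _ _ setT P0) => // o _ /=; rewrite !in_itv /= andbT.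
  by case: (leP 0 (theta o)) => h; [left|right].
- have [Pa|Pb] : (0 < P (theta @^-1` [set` (`]w, +oo[)%R]))%E \/
                 (0 < P (theta @^-1` [set` (`[(0:R), w])%R]))%E.
    apply: (@pos_split_itv _ _ _ P theta _ _ _ Ppos); last exact: measurable_funPTI.
    move=> o /=; rewrite !in_itv /= andbT => h.
    by case: (ltP w (theta o)) => h'; [left|right; apply/andP].
  + exists 1; split => //.
    apply: (@rect_pos R d Omega P theta Z _ _ 0 1 hi hZ _ Pa) => //; try lra.
    move=> o [/= th zo]; rewrite in_itv /= andbT in th.
    rewrite in_itv /= in zo; case/andP: zo => z1 z2.
    rewrite /T_r /T_h sq1 !ind_if mul1r.
    have -> : w < `|theta o + Z o| by rewrite ltr_normr; apply/orP; left; lra.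
    have -> : w < `|theta o| by rewrite ltr_normr; apply/orP; left; lra.
    by rewrite subrr normr0.
  + exists (w ^+ 2); split; first by rewrite exprn_gt0.
    apply: (@rect_pos R d Omega P theta Z _ _ (-1) 0 hi hZ _ Pb) => //; try lra.
    move=> o [/= th zo]; rewrite in_itv /= in th; case/andP: th => t1 t2.
    rewrite in_itv /= in zo; case/andP: zo => z1 z2.
    rewrite /T_r /T_h sqw !ind_if.
    have -> : (w < `|theta o + w * Z o|) = false.
      by apply/negbTE; rewrite -leNgt ler_norml; apply/andP; split; nra.
    have -> : (w < `|theta o|) = false.
      by apply/negbTE; rewrite -leNgt ler_norml; apply/andP; split; lra.
    by rewrite subrr normr0.
- have [Pa|Pb] : (0 < P (theta @^-1` [set` (`]-oo, - w[)%R]))%E \/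
                 (0 < P (theta @^-1` [set` (`[- w, (0:R)[)%R]))%E.
    apply: (@pos_split_itv _ _ _ P theta _ _ _ Pneg); last exact: measurable_funPTI.
    move=> o /=; rewrite !in_itv /= => h.
    by case: (ltP (theta o) (- w)) => h'; [left|right; apply/andP].
  + exists 1; split => //.
    apply: (@rect_pos R d Omega P theta Z _ _ (-1) 0 hi hZ _ Pa) => //; try lra.
    move=> o [/= th zo]; rewrite in_itv /= in th.
    rewrite in_itv /= in zo; case/andP: zo => z1 z2.
    rewrite /T_r /T_h sq1 !ind_if mul1r.
    have -> : w < `|theta o + Z o| by rewrite ltr_normr; apply/orP; right; lra.
    have -> : w < `|theta o| by rewrite ltr_normr; apply/orP; right; lra.
    by rewrite subrr normr0.
  + exists (w ^+ 2); split; first by rewrite exprn_gt0.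
    apply: (@rect_pos R d Omega P theta Z _ _ 0 1 hi hZ _ Pb) => //; try lra.
    move=> o [/= th zo]; rewrite in_itv /= in th; case/andP: th => t1 t2.
    rewrite in_itv /= in zo; case/andP: zo => z1 z2.
    rewrite /T_r /T_h sqw !ind_if.
    have -> : (w < `|theta o + w * Z o|) = false.
      by apply/negbTE; rewrite -leNgt ler_norml; apply/andP; split; nra.
    have -> : (w < `|theta o|) = false.
      by apply/negbTE; rewrite -leNgt ler_norml; apply/andP; split; lra.
    by rewrite subrr normr0.
Qed.
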